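(* Let $T>0$ and $\alpha_1,\alpha_2\ge0$ with $\alpha_1+\alpha_2=1$. Consider problem (P2): maximize $r$ over $(r,r_1,r_2,x,p_1,p_2)$, where $x:[0,T]\to\mathbb{R}$ is an arbitrary (measurable) trajectory with no speed constraint, subject to $r_k\ge\alpha_k r$ for $k=1,2$, $(r_1,r_2)\in\mathcal{C}(x,p)$, $p_1(t)+p_2(t)\le\bar P$ and $p_k(t)\ge0$ for all $t$. Then an optimal solution of (P2) is: $x^*(t)=-D/2$, $p_1^*(t)=\bar P$, $p_2^*(t)=0$ for $t\in[0,\alpha_1T)$, and $x^*(t)=D/2$, $p_2^*(t)=\bar P$, $p_1^*(t)=0$ for $t\in[\alpha_1T,T]$. The corresponding optimal rate pair is $r_1^*=\alpha_1\log_2\left(1+\frac{\bar P\beta_0}{H^2}\right)$, $r_2^*=\alpha_2\log_2\left(1+\frac{\bar P\beta_0}{H^2}\right)$.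
   Context: Fix $D>0$, $H>0$, $\beta_0>0$, $\bar P>0$. Ground users GU 1, GU 2 are at horizontal positions $x_1=-D/2$, $x_2=D/2$; for UAV position $x\in\mathbb{R}$ (constant altitude $H$), $h_k(x)=\beta_0/((x-x_k)^2+H^2)$. A power allocation is a pair of measurable functions $p_1,p_2:[0,T]\to[0,\infty)$. $\mathcal{C}(x,p)$ is the set of $(r_1,r_2)$, $r_1,r_2\ge0$, with $r_1\le\frac1T\int_0^T\log_2(1+p_1(t)h_1(x(t)))dt$, $r_2\le\frac1T\int_0^T\log_2(1+p_2(t)h_2(x(t)))dt$, $r_1+r_2\le\frac1T\int_0^T\log_2(1+p_1(t)h_1(x(t))+p_2(t)h_2(x(t)))dt$. *)

(* Defs.v *)
From HB Require Import structures.
From mathcomp Require Import all_boot all_order all_algebra.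
From mathcomp Require Import all_classical all_reals all_analysis.
Set Implicit Arguments. Unset Strict Implicit. Unset Printing Implicit Defensive.
Import Order.TTheory GRing.Theory Num.Theory.
Local Open Scope classical_set_scope.
Local Open Scope ring_scope.

Definition log2 {R : realType} (y : R) : R := ln y / ln 2.

Definition chgain {R : realType} (beta0 H xk x : R) : R :=
  beta0 / ((x - xk) ^+ 2 + H ^+ 2).

Definition avg_over {R : realType} (T : R) (f : R -> R) : \bar R :=
  ((T^-1)%:E * \int[lebesgue_measure]_(t in `[0%R, T]%classic) (f t)%:E)%E.

Definition cap_region {R : realType} (T D H beta0 : R) (x p1 p2 : R -> R)
    (r1 r2 : R) : Prop :=
  let h1 := fun t => chgain beta0 H (- (D / 2)) (x t) in
  let h2 := fun t => chgain beta0 H (D / 2) (x t) in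
  [/\ 0 <= r1, 0 <= r2,
      (r1%:E <= avg_over T (fun t => log2 (1 + p1 t * h1 t)))%E,
      (r2%:E <= avg_over T (fun t => log2 (1 + p2 t * h2 t)))%E &
      ((r1 + r2)%:E <= avg_over T (fun t => log2 (1 + p1 t * h1 t + p2 t * h2 t)))%E].

Definition feasible_P2 {R : realType} (T D H beta0 Pbar alpha1 alpha2 : R)
    (r r1 r2 : R) (x p1 p2 : R -> R) : Prop :=
  [/\ [/\ measurable_fun `[0, T] x, measurable_fun `[0, T] p1 &
          measurable_fun `[0, T] p2],
      alpha1 * r <= r1, alpha2 * r <= r2,
      cap_region T D H beta0 x p1 p2 r1 r2 &
      forall t, t \in `[0, T] -> [/\ 0 <= p1 t, 0 <= p2 t & p1 t + p2 t <= Pbar]].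

Definition optimal_P2 {R : realType} (T D H beta0 Pbar alpha1 alpha2 : R)
    (r r1 r2 : R) (x p1 p2 : R -> R) : Prop :=
  feasible_P2 T D H beta0 Pbar alpha1 alpha2 r r1 r2 x p1 p2 /\
  forall r' r1' r2' (x' p1' p2' : R -> R),
    feasible_P2 T D H beta0 Pbar alpha1 alpha2 r' r1' r2' x' p1' p2' -> r' <= r.

(* Main.v *)
Require Import Defs.
From HB Require Import structures.
From mathcomp Require Import all_boot all_order all_algebra.
From mathcomp Require Import all_classical all_reals all_analysis.
From mathcomp Require Import lra.
Import Order.TTheory GRing.Theory Num.Theory.
Local Open Scope classical_set_scope.
Local Open Scope ring_scope.

Lemma le_integral_nm d (T : measurableType d) (R : realType)
  (mu : {measure set T -> \bar R}) (D : set T) (f g : T -> \bar R) :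
  (forall x, D x -> (0 <= f x)%E) -> (forall x, D x -> (f x <= g x)%E) ->
  (\int[mu]_(x in D) f x <= \int[mu]_(x in D) g x)%E.
Proof.
move=> f0 fg.
have g0 : forall x, D x -> (0 <= g x)%E by move=> x Dx; exact: le_trans (f0 x Dx) (fg x Dx).
rewrite (ge0_integralE mu f0) (ge0_integralE mu g0) /=.
apply: ereal_sup_le => _ [h hf <-]; exists h => // x.
apply: le_trans (hf x) _; rewrite /patch; case: ifP => // /[!inE] Dx.
exact: fg.
Qed.

Lemma pw_meas (R : realType) (c a b : R) (D : set R) :
  measurable_fun D (fun t : R => if t < c then a else b).
Proof.
apply: measurable_funTS; apply: measurable_fun_ifT.
- exact: (@measurable_realfun.measurable_fun_ltr _ _ _ setT id (cst c) (@measurable_id _ _ _) (measurable_cst _)).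
- exact: measurable_cst.
- exact: measurable_cst.
Qed.

Lemma log2_ge0 (R : realType) (y : R) : 1 <= y -> 0 <= log2 y.
Proof.
move=> y1; rewrite /log2 divr_ge0 //; apply: ln_ge0 => //.
by rewrite ler1n.
Qed.

Lemma log2_le (R : realType) (y z : R) : 0 < y -> y <= z -> log2 y <= log2 z.
Proof.
move=> y0 yz; rewrite /log2 ler_pM2r; last by rewrite invr_gt0 ln_gt0 // ltr1n.
by rewrite ler_ln // ?posrE // (lt_le_trans y0 yz).
Qed.

Lemma leb_itv (R : realType) (T : R) : 0 < T ->
  lebesgue_measure (`[0, T] : set R) = T%:E.
Proof.
move=> T0; rewrite lebesgue_measure_itv /= lte_fin T0 /= -EFinD subr0 //.
Qed.

Lemma int_step (R : realType) (c T L : R) : 0 <= L -> 0 <= c -> c <= T ->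
  (\int[lebesgue_measure]_(t in `[0%R, T]) (L * \1_(`]-oo, c[%classic : set R) t)%:E =
   (L * c)%:E)%E.
Proof.
move=> L0 c0 cT.
have E := @integralZl_indic _ _ _ lebesgue_measure `[0, T] (measurable_itv _) (fun _ => `]-oo, c[%classic : set R) L.
rewrite /= in E; rewrite E //; last first.
  by move=> /lt_le_trans /(_ L0); rewrite ltxx.
rewrite integral_indic //.
have -> : (`]-oo, c[%classic : set R) `&` `[0, T] = `[0, c[%classic.
  apply/seteqP; split => t /=; rewrite !in_itv /=.
    by case=> -> /andP[->].
  move=> /andP[t0 tc]; split => //; rewrite t0 /=.
  exact: le_trans (ltW tc) cT.
have M : lebesgue_measure (`[0, c[%classic : set R) = c%:E.
  rewrite lebesgue_measure_itv /= lte_fin.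
  case: ltP => [c0'|c0']; first by rewrite sube0.
  by have -> : c = 0 by apply/eqP; rewrite eq_le c0 c0'.
by rewrite EFinM; congr (_ * _)%E; exact: M.
Qed.

Lemma int_step2 (R : realType) (c T L : R) : 0 <= L -> 0 <= c -> c <= T ->
  (\int[lebesgue_measure]_(t in `[0%R, T]) (L * \1_(`[c, +oo[%classic : set R) t)%:E =
   (L * (T - c))%:E)%E.
Proof.
move=> L0 c0 cT.
have E := @integralZl_indic _ _ _ lebesgue_measure `[0, T] (measurable_itv _) (fun _ => `[c, +oo[%classic : set R) L.
rewrite /= in E; rewrite E //; last first.
  by move=> /lt_le_trans /(_ L0); rewrite ltxx.
rewrite integral_indic //.
have -> : (`[c, +oo[%classic : set R) `&` `[0, T] = `[c, T]%classic.
  apply/seteqP; split => t /=; rewrite !in_itv /= ?andbT.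
    by case=> -> /andP[_ ->].
  move=> /andP[ct tT]; split => //; rewrite tT andbT.
  exact: le_trans c0 ct.
have M : lebesgue_measure (`[c, T]%classic : set R) = (T - c)%:E.
  rewrite lebesgue_measure_itv /= lte_fin.
  case: ltP => [c0'|c0']; first by rewrite EFinB.
  have -> : c = T by apply/eqP; rewrite eq_le cT c0'.
  by rewrite subrr.
by rewrite EFinM; congr (_ * _)%E; exact: M.
Qed.

Theorem lemma4 (R : realType) (D H beta0 Pbar T alpha1 alpha2 : R) :
  0 < D -> 0 < H -> 0 < beta0 -> 0 < Pbar -> 0 < T ->
  0 <= alpha1 -> 0 <= alpha2 -> alpha1 + alpha2 = 1 ->
  let xs := fun t : R => if t < alpha1 * T then - (D / 2) else D / 2 in
  let p1s := fun t : R => if t < alpha1 * T then Pbar else 0 in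
  let p2s := fun t : R => if t < alpha1 * T then 0 else Pbar in
  let L := log2 (1 + Pbar * beta0 / H ^+ 2) in
  optimal_P2 T D H beta0 Pbar alpha1 alpha2 L (alpha1 * L) (alpha2 * L) xs p1s p2s.
Proof.
move=> D0 H0 b0 P0 T0 a10 a20 a12 xs p1s p2s L.
have H20 : 0 < H ^+ 2 by rewrite exprn_gt0.
have g0 : 0 <= Pbar * beta0 / H ^+ 2.
  by rewrite divr_ge0 // ?mulr_ge0 // ltW.
have L0 : 0 <= L by apply: log2_ge0; rewrite lerDl.
have hb : forall xk y, 0 <= chgain beta0 H xk y <= beta0 / H ^+ 2.
  move=> xk y; rewrite /chgain.
  have s0 : 0 < (y - xk) ^+ 2 + H ^+ 2 by rewrite ltr_wpDl // sqr_ge0.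
  apply/andP; split; first by rewrite divr_ge0 // ltW.
  rewrite ler_pdivrMr // mulrAC ler_pdivlMr // ler_pM2l //.
  by rewrite lerDr sqr_ge0.
have c0 : forall xk, chgain beta0 H xk xk = beta0 / H ^+ 2.
  by move=> xk; rewrite /chgain subrr expr0n /= add0r.
have a11 : alpha1 <= 1 by rewrite -a12 lerDl.
have aT : alpha1 * T <= T by rewrite -[leRHS]mul1r ler_wpM2r // ltW.
have iTE : forall c : R, ((T^-1)%:E * (c * T)%:E)%E = c%:E.
  by move=> c; rewrite -EFinM mulrCA mulVf ?mulr1 // gt_eqF.
split.
  split => //.
  - by split; apply: pw_meas.
  - split.
    + by rewrite mulr_ge0.
    + by rewrite mulr_ge0.
    + rewrite /avg_over (@eq_integral _ _ _ lebesgue_measure `[0%R, T]%classic (fun t => (L * \1_(`]-oo, alpha1 * T[%classic ) t)%:E)); last first.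
        move=> t _; rewrite /p1s /xs; case: ifP => h.
          rewrite indicE mem_set ?in_itv /= ?h // mulr1 c0 mulrA //.
        rewrite indicE memNset; last by rewrite /= in_itv /= h.
        by rewrite mulr0 mul0r addr0 /log2 ln1 mul0r.
      have EI := @int_step R (alpha1 * T) T L L0 (mulr_ge0 a10 (ltW T0)) aT.
      rewrite le_eqVlt; apply/orP; left; apply/eqP.
      transitivity ((T^-1)%:E * (L * (alpha1 * T))%:E)%E; first by rewrite mulrA iTE mulrC.
      by congr (_ * _)%E; symmetry; exact: EI.
    + rewrite /avg_over (@eq_integral _ _ _ lebesgue_measure `[0%R, T]%classic (fun t => (L * \1_(`[alpha1 * T, +oo[%classic ) t)%:E)); last first.
        move=> t _; rewrite /p2s /xs; case: ifP => h.
          rewrite indicE memNset; last by rewrite /= in_itv /= leNgt h.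
          by rewrite mulr0 mul0r addr0 /log2 ln1 mul0r.
        rewrite indicE mem_set; last by rewrite /= in_itv /= leNgt h.
        by rewrite mulr1 c0 mulrA.
      have EI := @int_step2 R (alpha1 * T) T L L0 (mulr_ge0 a10 (ltW T0)) aT.
      have E2 : T - alpha1 * T = alpha2 * T.
        by apply/eqP; rewrite subr_eq -mulrDl [alpha2 + _]addrC a12 mul1r.
      rewrite E2 in EI.
      rewrite le_eqVlt; apply/orP; left; apply/eqP.
      transitivity ((T^-1)%:E * (L * (alpha2 * T))%:E)%E; first by rewrite mulrA iTE mulrC.
      by congr (_ * _)%E; symmetry; exact: EI.
    + rewrite /avg_over (@eq_integral _ _ _ lebesgue_measure `[0%R, T]%classic (fun t => cst L%:E t)); last first.
        move=> t _; rewrite /p1s /p2s /xs; case: ifP => h.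
          by rewrite mul0r addr0 c0 mulrA.
        by rewrite mul0r addr0 c0 mulrA.
      rewrite (integral_cst _ _ L%:E) //= leb_itv // -(EFinM L T) iTE -mulrDl a12 mul1r //.
  - move=> t _; rewrite /p1s /p2s; case: ifP => _.
      by split; rewrite ?addr0 ?lexx ?ltW.
    by split; rewrite ?add0r ?lexx ?ltW.
move=> r' r1' r2' x' p1' p2' [_ h1 h2 [_ _ _ _ hs] hp].
have : ((r1' + r2')%:E <= L%:E)%E.
  apply: (le_trans hs); rewrite /avg_over.
  have iT : (0 <= (T^-1)%:E)%E by rewrite lee_fin invr_ge0 ltW.
  apply: le_trans.
    apply: (lee_wpmul2l iT).
    apply: (@le_integral_nm _ _ _ _ _ _ (fun t => cst L%:E t)).
      move=> t Dt; rewrite lee_fin; apply: log2_ge0.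
      have [p10 p20 _] := hp t Dt.
      have /andP[q1 _] := hb (- (D / 2)) (x' t).
      have /andP[q2 _] := hb (D / 2) (x' t).
      by rewrite -addrA lerDl addr_ge0 // mulr_ge0.
    move=> t Dt; rewrite lee_fin /L; apply: log2_le.
      have [p10 p20 _] := hp t Dt.
      have /andP[q1 _] := hb (- (D / 2)) (x' t).
      have /andP[q2 _] := hb (D / 2) (x' t).
      by rewrite -addrA ltr_wpDr // addr_ge0 // mulr_ge0.
    have [p10 p20 ps] := hp t Dt.
    have /andP[_ q1] := hb (- (D / 2)) (x' t).
    have /andP[_ q2] := hb (D / 2) (x' t).
    rewrite -addrA lerD2l -mulrA.
    apply: le_trans (_ : p1' t * (beta0 / H ^+ 2) + p2' t * (beta0 / H ^+ 2) <= _).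
      by apply: lerD; apply: ler_wpM2l.
    by rewrite -mulrDl ler_wpM2r // divr_ge0 // ltW.
  rewrite (integral_cst _ _ L%:E) //= leb_itv // -EFinM lee_fin; rewrite mulrCA mulVf ?mulr1 //.
  by rewrite gt_eqF.
rewrite lee_fin => hL.
have -> : r' = alpha1 * r' + alpha2 * r' by rewrite -mulrDl a12 mul1r.
by apply: le_trans hL; apply: lerD.
Qed.
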